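(* Let $\Omega\subset\mathbb{C}$ be a simply connected open set with conformal coordinate $z=x+iy$, let $N:\Omega\to\mathbb{S}^2\subset\mathbb{R}^3$ be a smooth harmonic map, and let $f:\Omega\to\mathbb{R}^3$ be a spherical frontal associated to $N$, i.e. a smooth map with $f_x=N\times N_y$ and $f_y=-N\times N_x$. Let $p\in\Omega$. Then $f$ is a wave front near $p$ if and only if $\operatorname{rank}(dN)_p\neq 0$.
   Context: A smooth map $N:\Omega\to\mathbb{S}^2$ is harmonic iff $N\times(N_{xx}+N_{yy})=0$; this is the integrability condition for $f_x=N\times N_y,\ f_y=-N\times N_x$, so such $f$ exists and is unique up to translation. A map $h:M\to\mathbb{R}^3$ from a surface is a frontal if there is a smooth $\mathcal{N}:M\to\mathbb{S}^2$ with $dh$ orthogonal to $\mathcal{N}$; it is a wave front (front) if the Legendrian lift $(h,\mathcal{N}):M\to\mathbb{R}^3\times\mathbb{S}^2$ is an immersion. For the spherical frontal $f$ the relevant lift is $(f,N)$. *)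

(* Defs.v *)
From HB Require Import structures.
From mathcomp Require Import all_boot all_order all_algebra.
From mathcomp Require Import all_classical all_reals all_analysis.
Set Implicit Arguments. Unset Strict Implicit. Unset Printing Implicit Defensive.
Import Order.TTheory GRing.Theory Num.Theory.
Import numFieldNormedType.Exports.
Local Open Scope classical_set_scope.
Local Open Scope ring_scope.

Section Defs.
Variable R : realType.

Definition ex : 'rV[R]_2 := \row_(j < 2) (if val j == 0%N then 1 else 0).
Definition ey : 'rV[R]_2 := \row_(j < 2) (if val j == 1%N then 1 else 0).

Definition dx {n} (g : 'rV[R]_2 -> 'rV[R]_n) (q : 'rV[R]_2) := derive g q ex.
Definition dy {n} (g : 'rV[R]_2 -> 'rV[R]_n) (q : 'rV[R]_2) := derive g q ey.

Definition dot3 (u v : 'rV[R]_3) : R := \sum_(i < 3) u 0 i * v 0 i.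
Definition cross (u v : 'rV[R]_3) : 'rV[R]_3 :=
  \row_(i < 3)
    (if val i == 0%N then u 0 1%:R * v 0 2%:R - u 0 2%:R * v 0 1%:R
     else if val i == 1%N then u 0 2%:R * v 0 0 - u 0 0 * v 0 2%:R
     else u 0 0 * v 0 1%:R - u 0 1%:R * v 0 0).

Definition sphere2 : set 'rV[R]_3 := [set u | dot3 u u = 1].

Fixpoint iter_derive {n} (vs : seq 'rV[R]_2) (g : 'rV[R]_2 -> 'rV[R]_n)
    : 'rV[R]_2 -> 'rV[R]_n :=
  match vs with
  | [::] => g
  | v :: vs' => fun q => derive (iter_derive vs' g) q v
  end.

Definition smooth_on {n} (A : set 'rV[R]_2) (g : 'rV[R]_2 -> 'rV[R]_n) :=
  forall (vs : seq 'rV[R]_2) (q : 'rV[R]_2), A q ->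
    {for q, continuous (iter_derive vs g)} /\
    forall v, derivable (iter_derive vs g) q v.

Definition simply_connected (A : set 'rV[R]_2) :=
  connected A /\
  forall g : R -> 'rV[R]_2,
    {within `[0, 1], continuous g} -> g 0 = g 1 -> g @` `[0, 1] `<=` A ->
    exists H : R * R -> 'rV[R]_2,
      [/\ {within `[0, 1] `*` `[0, 1], continuous H},
          H @` (`[0, 1] `*` `[0, 1]) `<=` A,
          (forall s, s \in `[0, 1] -> H (s, 0) = g s /\ H (s, 1) = g 0) &
          (forall t, t \in `[0, 1] -> H (0, t) = g 0 /\ H (1, t) = g 0)].

Definition harmonic_S2 (A : set 'rV[R]_2) (N : 'rV[R]_2 -> 'rV[R]_3) :=
  smooth_on A N /\ (forall q, A q -> sphere2 (N q)) /\
  forall q, A q -> cross (N q) (dx (dx N) q + dy (dy N) q) = 0.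

Definition spherical_frontal (A : set 'rV[R]_2) (N f : 'rV[R]_2 -> 'rV[R]_3) :=
  smooth_on A f /\
  forall q, A q -> dx f q = cross (N q) (dy N q) /\
                   dy f q = - cross (N q) (dx N q).

(* Jacobian matrix of g at q : rows are g_x(q), g_y(q); it represents dg_q *)
Definition jac_mx {n} (g : 'rV[R]_2 -> 'rV[R]_n) (q : 'rV[R]_2)
    : 'M[R]_(1 + 1, n) := col_mx (dx g q) (dy g q).

Definition immersion_at {n} (g : 'rV[R]_2 -> 'rV[R]_n) q :=
  \rank (jac_mx g q) = 2%N.

(* Legendrian lift (h, NN) : M -> R^3 x S^2 inside R^3 x R^3 = R^6 *)
Definition legendrian_lift (h NN : 'rV[R]_2 -> 'rV[R]_3) : 'rV[R]_2 -> 'rV[R]_(3 + 3) :=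
  fun q => row_mx (h q) (NN q).

Definition frontal_on (U : set 'rV[R]_2) (h NN : 'rV[R]_2 -> 'rV[R]_3) :=
  smooth_on U h /\ smooth_on U NN /\ (forall q, U q -> sphere2 (NN q)) /\
  forall q, U q -> dot3 (dx h q) (NN q) = 0 /\ dot3 (dy h q) (NN q) = 0.

Definition wave_front_on (U : set 'rV[R]_2) (h NN : 'rV[R]_2 -> 'rV[R]_3) :=
  frontal_on U h NN /\ forall q, U q -> immersion_at (legendrian_lift h NN) q.

Definition wave_front_near (A : set 'rV[R]_2) (h NN : 'rV[R]_2 -> 'rV[R]_3) p :=
  exists U : set 'rV[R]_2, [/\ open U, U p, U `<=` A & wave_front_on U h NN].

End Defs.

(* Main.v *)
Require Import Defs.
From mathcomp Require Import all_boot all_order all_algebra.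
From mathcomp Require Import all_classical all_reals all_analysis.
From mathcomp Require Import ring lra.
Import Order.TTheory GRing.Theory Num.Theory.
Import numFieldNormedType.Exports.
Local Open Scope classical_set_scope.
Local Open Scope ring_scope.
Section S.
Variable R : realType.
Lemma sum3 (F : 'I_3 -> R) : \sum_(i < 3) F i = F 0 + F 1%:R + F 2%:R.
Proof. rewrite !big_ord_recr big_ord0 /= add0r. congr (_ + _ + _); congr F; exact/val_inj. Qed.
Lemma row3P (u v : 'rV[R]_3) : u 0 0 = v 0 0 -> u 0 1%:R = v 0 1%:R -> u 0 2%:R = v 0 2%:R -> u = v.
Proof.
move=> h0 h1 h2; apply/rowP => i; case: i => -[|[|[|//]]] Hi.
- by rewrite (_ : Ordinal Hi = 0) //; exact/val_inj.
- by rewrite (_ : Ordinal Hi = 1%:R) //; exact/val_inj.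
- by rewrite (_ : Ordinal Hi = 2%:R) //; exact/val_inj.
Qed.

Lemma scal (n0 n1 n2 x0 x1 x2 y0 y1 y2 a b : R) :
 n0*n0+n1*n1+n2*n2 = 1 -> n0*x0+n1*x1+n2*x2 = 0 -> n0*y0+n1*y1+n2*y2 = 0 ->
 a*x0+b*y0 = 0 -> a*x1+b*y1 = 0 -> a*x2+b*y2 = 0 ->
 a*(n1*y2-n2*y1) + b*(-(n1*x2-n2*x1)) = 0 ->
 a*(n2*y0-n0*y2) + b*(-(n2*x0-n0*x2)) = 0 ->
 a*(n0*y1-n1*y0) + b*(-(n0*x1-n1*x0)) = 0 ->
 [/\ (a^+2+b^+2) * x0 = 0, (a^+2+b^+2) * x1 = 0 & (a^+2+b^+2) * x2 = 0] /\
 [/\ (a^+2+b^+2) * y0 = 0, (a^+2+b^+2) * y1 = 0 & (a^+2+b^+2) * y2 = 0].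
Proof.
move=> hn hx hy e0 e1 e2 k0 k1 k2.
have w0 : a*y0 - b*x0 = 0.
  rewrite [LHS](_ : _ = (a*y0-b*x0)*(1 - (n0*n0+n1*n1+n2*n2)) + (a*(n0*y0+n1*y1+n2*y2) - b*(n0*x0+n1*x1+n2*x2))*n0
     - n1*(a*(n0*y1-n1*y0) + b*(-(n0*x1-n1*x0))) + n2*(a*(n2*y0-n0*y2) + b*(-(n2*x0-n0*x2)))); last by ring.
  by rewrite hn hx hy k1 k2; ring.
have w1 : a*y1 - b*x1 = 0.
  rewrite [LHS](_ : _ = (a*y1-b*x1)*(1 - (n0*n0+n1*n1+n2*n2)) + (a*(n0*y0+n1*y1+n2*y2) - b*(n0*x0+n1*x1+n2*x2))*n1
     - n2*(a*(n1*y2-n2*y1) + b*(-(n1*x2-n2*x1))) + n0*(a*(n0*y1-n1*y0) + b*(-(n0*x1-n1*x0)))); last by ring.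
  by rewrite hn hx hy k0 k2; ring.
have w2 : a*y2 - b*x2 = 0.
  rewrite [LHS](_ : _ = (a*y2-b*x2)*(1 - (n0*n0+n1*n1+n2*n2)) + (a*(n0*y0+n1*y1+n2*y2) - b*(n0*x0+n1*x1+n2*x2))*n2
     - n0*(a*(n2*y0-n0*y2) + b*(-(n2*x0-n0*x2))) + n1*(a*(n1*y2-n2*y1) + b*(-(n1*x2-n2*x1)))); last by ring.
  by rewrite hn hx hy k0 k1; ring.
split; split.
- by rewrite [LHS](_ : _ = a*(a*x0+b*y0) - b*(a*y0-b*x0)); [rewrite e0 w0; ring | ring].
- by rewrite [LHS](_ : _ = a*(a*x1+b*y1) - b*(a*y1-b*x1)); [rewrite e1 w1; ring | ring].
- by rewrite [LHS](_ : _ = a*(a*x2+b*y2) - b*(a*y2-b*x2)); [rewrite e2 w2; ring | ring].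
- by rewrite [LHS](_ : _ = b*(a*x0+b*y0) + a*(a*y0-b*x0)); [rewrite e0 w0; ring | ring].
- by rewrite [LHS](_ : _ = b*(a*x1+b*y1) + a*(a*y1-b*x1)); [rewrite e1 w1; ring | ring].
- by rewrite [LHS](_ : _ = b*(a*x2+b*y2) + a*(a*y2-b*x2)); [rewrite e2 w2; ring | ring].
Qed.

Lemma alg (n X Y : 'rV[R]_3) (a b : R) : dot3 n n = 1 -> dot3 n X = 0 -> dot3 n Y = 0 ->
  a *: X + b *: Y = 0 -> a *: cross n Y + b *: (- cross n X) = 0 ->
  X != 0 \/ Y != 0 -> a = 0 /\ b = 0.
Proof.
rewrite /dot3 !sum3 => hn hx hy H K hXY.
have c i : a * X 0 i + b * Y 0 i = 0.
  by have := congr1 (fun M : 'rV_3 => M 0 i) H; rewrite !mxE.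
have k i : a * cross n Y 0 i + b * - cross n X 0 i = 0.
  by have := congr1 (fun M : 'rV_3 => M 0 i) K; rewrite !mxE.
have := k 0; have := k 1%:R; have := k 2%:R; rewrite !mxE /= => k2 k1 k0.
have [[z0 z1 z2] [z3 z4 z5]] := @scal _ _ _ _ _ _ _ _ _ _ _ hn hx hy (c 0) (c 1%:R) (c 2%:R) k0 k1 k2.
have [s0|s0] := eqVneq (a^+2 + b^+2) 0.
  by split; nra.
exfalso; case: hXY => /negP; apply; apply/eqP; apply: row3P; rewrite mxE;
  apply/(mulfI s0); rewrite mulr0 //.
Qed.

Lemma cross0 (u : 'rV[R]_3) : cross u 0 = 0.
Proof. apply/rowP => i; by rewrite !mxE !mulr0 subrr !if_same. Qed.

Lemma dot_cross (u v : 'rV[R]_3) : dot3 (cross u v) u = 0.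
Proof. by rewrite /dot3 sum3 !mxE /=; ring. Qed.

Lemma dot_crossN (u v : 'rV[R]_3) : dot3 (- cross u v) u = 0.
Proof. by rewrite /dot3 sum3 !mxE /=; ring. Qed.


Lemma der_comp (g : 'rV[R]_2 -> 'rV[R]_3) q v i : derivable g q v ->
  derivable (fun x => g x 0 i) q v /\ derive (fun x => g x 0 i) q v = derive g q v 0 i.
Proof.
move=> dg; split; first by move/derivable_mxP : dg; apply.
by rewrite (derive_mx dg) mxE.
Qed.

Lemma derive_lift (g h : 'rV[R]_2 -> 'rV[R]_3) q v :
  derivable g q v -> derivable h q v ->
  derive (legendrian_lift g h) q v = row_mx (derive g q v) (derive h q v).
Proof.
move=> dg dh.
have El k : (fun x => legendrian_lift g h x 0 (lshift 3 k)) = (fun x => g x 0 k).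
  by apply/funext => x; rewrite /legendrian_lift row_mxEl.
have Er k : (fun x => legendrian_lift g h x 0 (rshift 3 k)) = (fun x => h x 0 k).
  by apply/funext => x; rewrite /legendrian_lift row_mxEr.
have dl : derivable (legendrian_lift g h) q v.
  apply/derivable_mxP => i j; rewrite (ord1 i) -(@splitK 3 3 j).
  case: (fintype.split j) => k /=.
  - by rewrite El; move/derivable_mxP : dg; apply.
  - by rewrite Er; move/derivable_mxP : dh; apply.
rewrite (derive_mx dl); apply/matrixP => i j; rewrite mxE (ord1 i) -(@splitK 3 3 j).
case: (fintype.split j) => k /=.
- by rewrite row_mxEl (derive_mx dg) mxE El.
- by rewrite row_mxEr (derive_mx dh) mxE Er.
Qed.

Lemma orth (N : 'rV[R]_2 -> 'rV[R]_3) (A : set 'rV[R]_2) q v : open A -> A q ->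
  (forall x, A x -> dot3 (N x) (N x) = 1) -> derivable N q v ->
  dot3 (N q) (derive N q v) = 0.
Proof.
move=> oA Aq hN dN.
have e1 : derive (fun x => dot3 (N x) (N x)) q v = 0.
  rewrite (@near_eq_derive _ _ _ _ (fun=> (1:R^o)) q v) ?derive_cst //.
  have nA : \forall x \near q, A x by apply: open_nbhs_nbhs; split.
  by apply: filterS nA => x Ax; rewrite /= hN.
move: e1; have -> : (fun x => dot3 (N x) (N x)) = \sum_(i < 3) (fun x => N x 0 i * N x 0 i).
  by rewrite fct_sumE; apply/funext => x.
rewrite derive_sum; last first.
  move=> i; have [d1 _] := der_comp N q v i dN.
  exact: (@derivableM _ _ (fun x => N x 0 i) (fun x => N x 0 i)).
rewrite (eq_bigr (fun i => 2 * (N q 0 i * derive N q v 0 i))); last first.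
  move=> i _; have [d1 d2] := der_comp N q v i dN.
  rewrite (@deriveM _ _ (fun x => N x 0 i) (fun x => N x 0 i)) // d2 /=; change (N q 0 i * derive N q v 0 i + N q 0 i * derive N q v 0 i = 2 * (N q 0 i * derive N q v 0 i)); ring.
by rewrite -mulr_sumr /dot3 => /eqP; rewrite mulf_eq0 pnatr_eq0 /= => /eqP.
Qed.
End S.

Theorem proposition2p1 (R : realType) (Omega : set 'rV[R]_2)
    (N f : 'rV[R]_2 -> 'rV[R]_3) (p : 'rV[R]_2) :
  open Omega -> simply_connected Omega ->
  harmonic_S2 Omega N -> spherical_frontal Omega N f ->
  Omega p ->
  (wave_front_near Omega f N p <-> \rank (jac_mx N p) != 0%N).
Proof.
move=> oO _ [smN [sphN _]] [smf hf] Op.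
have dN q v : Omega q -> derivable N q v by move=> Oq; exact: ((smN [::] q Oq).2 v).
have df q v : Omega q -> derivable f q v by move=> Oq; exact: ((smf [::] q Oq).2 v).
have ort q v : Omega q -> dot3 (N q) (derive N q v) = 0.
  by move=> Oq; exact: (@orth R N Omega q v oO Oq sphN (dN q v Oq)).
have jacL q : Omega q -> jac_mx (legendrian_lift f N) q =
    col_mx (row_mx (dx f q) (dx N q)) (row_mx (dy f q) (dy N q)).
  by move=> Oq; rewrite /jac_mx /dx /dy !derive_lift //; auto.
split.
- case=> U [oU Up UO [_ imm]].
  apply/negP; rewrite mxrank_eq0 /jac_mx col_mx_eq0 => /andP[/eqP hx /eqP hy].
  have := imm p Up; rewrite /immersion_at jacL; last exact: UO.
  by rewrite (hf p Op).1 (hf p Op).2 hx hy cross0 oppr0 !row_mx0 col_mx0 mxrank0.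
- move=> hr.
  have hp : dx N p != 0 \/ dy N p != 0.
    by move: hr; rewrite mxrank_eq0 /jac_mx col_mx_eq0 negb_and => /orP[]; [left|right].
  exists (fun q => Omega q /\ (dx N q != 0 \/ dy N q != 0)); split => //.
  + rewrite openE => q [Oq hq]; rewrite /interior.
    have nO : \forall x \near q, Omega x by apply: open_nbhs_nbhs; split.
    case: hq => hq.
    * have cx : \forall x \near q, dx N x != 0.
        by have := (smN [:: ex R] q Oq).1 => /cvgr_neq0 /(_ hq).
      by near=> x; split; [near: x; exact: nO | left; near: x; exact: cx].
    * have cy : \forall x \near q, dy N x != 0.
        by have := (smN [:: ey R] q Oq).1 => /cvgr_neq0 /(_ hq).
      by near=> x; split; [near: x; exact: nO | right; near: x; exact: cy].
  + by move=> q [].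
  + split.
      split; first by move=> vs q [Oq _]; exact: smf.
      split; first by move=> vs q [Oq _]; exact: smN.
      split; first by move=> q [Oq _]; exact: sphN.
      move=> q [Oq _]; rewrite (hf q Oq).1 (hf q Oq).2.
      by rewrite dot_cross dot_crossN.
    move=> q [Oq hq]; rewrite /immersion_at jacL //.
    apply/eqP; rewrite eqn_leq rank_leq_row row_leq_rank; apply/inj_row_free => w.
    have ew : w = row_mx (w 0 0)%:M (w 0 1)%:M :> 'rV_(1+1).
      apply/rowP => j; rewrite -(@splitK 1 1 j); case: (fintype.split j) => k /=.
      - by rewrite row_mxEl (ord1 k) mxE /=; congr (w 0); exact/val_inj.
      - by rewrite row_mxEr (ord1 k) mxE /=; congr (w 0); exact/val_inj.
    rewrite ew (@mul_row_col R 1 1 1 (3+3)).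
    rewrite !mul_scalar_mx !scale_row_mx add_row_mx -row_mx0 => /eq_row_mx[h1 h2].
    move: h1; rewrite (hf q Oq).1 (hf q Oq).2 => h1.
    have [-> ->] := @alg R _ _ _ _ _ (sphN q Oq) (ort q (ex R) Oq) (ort q (ey R) Oq) h2 h1 hq.
    by rewrite !raddf0 row_mx0.
Unshelve. all: by end_near.
Qed.
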